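(* Let $Q:\mathcal S\times\mathcal A\to\mathbb R$ be arbitrary and let $\pi_Q$ be a deterministic policy with $\pi_Q(s)\in\arg\max_aQ(s,a)$. Then $$\mathbb E_{s_0\sim\rho}\big(V^\star(s_0)-V^{\pi_Q}(s_0)\big)\le\mathbb E\Big[\sum_{t=0}^\infty\gamma^t\Big((Q^\star-Q)(s_t,\pi^\star(s_t))+(Q-Q^\star)(s_t,\pi_Q(s_t))\Big)\Big],$$ where the expectation is over $s_0\sim\rho$, $a_\tau=\pi_Q(s_\tau)$, $s_{\tau+1}\sim\hat P^{\pi_Q}_{s_\tau,a_\tau}$ with $\hat P^{\pi_Q}(s'|s,a)\propto P(s'|s,a)e^{-\beta V^{\pi_Q}(s')}$, and $\pi^\star(s)\in\arg\max_aQ^\star(s,a)$.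
   Context: $\mathcal S,\mathcal A$ finite; $P=\{P_{s,a}\}$ a transition kernel with $P_{s,a}$ a probability distribution on $\mathcal S$; $r:\mathcal S\times\mathcal A\to[0,1]$; $\gamma\in[0,1)$; $\rho$ a distribution on $\mathcal S$; $\beta>0$. For a policy $\pi$ (map from states to distributions on $\mathcal A$; a deterministic policy is identified with the chosen action $\pi(s)$), $V^\pi,Q^\pi$ are the unique solutions of $V^\pi(s)=\sum_a\pi(a|s)Q^\pi(s,a)$, $Q^\pi(s,a)=r(s,a)-\gamma\beta^{-1}\log\mathbb E_{s'\sim P_{s,a}}e^{-\beta V^\pi(s')}$, and $V^\star,Q^\star$ the unique solutions of $V^\star(s)=\max_aQ^\star(s,a)$, $Q^\star(s,a)=r(s,a)-\gamma\beta^{-1}\log\mathbb E_{s'\sim P_{s,a}}e^{-\beta V^\star(s')}$ (these are the risk-sensitive values for the entropic risk measure, equivalently KL-regularized robust values with penalty $\beta^{-1}\mathrm{KL}$). *)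

(* Defs.v *)
From mathcomp Require Import all_boot all_order all_algebra.
From mathcomp Require Import all_classical all_reals all_analysis.
Set Implicit Arguments. Unset Strict Implicit. Unset Printing Implicit Defensive.
Import Order.TTheory GRing.Theory Num.Theory.
Local Open Scope ring_scope.

Section Defs.
Context {R : realType} {S A : finType}.

(* P s a s' = P(s'|s,a) is a transition kernel *)
Definition is_kernel (P : S -> A -> S -> R) : Prop :=
  (forall s a s', 0 <= P s a s') /\ (forall s a, \sum_(s' : S) P s a s' = 1).

Definition is_dist (rho : S -> R) : Prop :=
  (forall s, 0 <= rho s) /\ \sum_(s : S) rho s = 1.

Definition soft_Q (P : S -> A -> S -> R) (r : S -> A -> R) (gamma beta : R)
  (V : S -> R) (s : S) (a : A) : R :=
  r s a - gamma * beta^-1 * ln (\sum_(s' : S) P s a s' * expR (- (beta * V s'))).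

Definition is_policy_values (P : S -> A -> S -> R) (r : S -> A -> R) (gamma beta : R)
  (pi : S -> A) (V : S -> R) (Q : S -> A -> R) : Prop :=
  (forall s, V s = Q s (pi s)) /\ (forall s a, Q s a = soft_Q P r gamma beta V s a).

(* (V,Q) = (V^star, Q^star):  V(s) = max_a Q(s,a) *)
Definition is_optimal_values (P : S -> A -> S -> R) (r : S -> A -> R) (gamma beta : R)
  (V : S -> R) (Q : S -> A -> R) : Prop :=
  (forall s, (forall a, Q s a <= V s) /\ (exists a, V s = Q s a)) /\
  (forall s a, Q s a = soft_Q P r gamma beta V s a).

Definition tilted_kernel (P : S -> A -> S -> R) (beta : R) (V : S -> R)
  (s : S) (a : A) (s' : S) : R :=
  P s a s' * expR (- (beta * V s')) /
  \sum_(s'' : S) P s a s'' * expR (- (beta * V s'')).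

(* law of s_t for s_0 ~ rho, a_t = pi(s_t), s_{t+1} ~ K(.|s_t,a_t) *)
Fixpoint state_law (rho : S -> R) (K : S -> A -> S -> R) (pi : S -> A) (t : nat)
  : S -> R :=
  match t with
  | O => rho
  | t'.+1 => fun s' => \sum_(s : S) state_law rho K pi t' s * K s (pi s) s'
  end.

End Defs.

(* Main.v *)
Require Import Defs.
From mathcomp Require Import all_boot all_order all_algebra.
From mathcomp Require Import all_classical all_reals all_analysis.
Import Order.TTheory GRing.Theory Num.Theory numFieldNormedType.Exports.
From mathcomp Require Import ring lra.
Local Open Scope ring_scope.
Local Open Scope classical_set_scope.
Lemma ln_le_sub1 (R : realType) (y : R) : 0 < y -> ln y <= y - 1.
Proof.
move=> y0; have := expR_ge1Dx (ln y); rewrite lnK ?posrE // => H.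
by rewrite lerBrDl.
Qed.

Lemma jensen_ln (R : realType) (S : finType) (a x : S -> R) :
  (forall i, 0 <= a i) -> 0 < \sum_i a i ->
  \sum_i a i * x i <= (\sum_i a i) * (ln (\sum_i a i * expR (x i)) - ln (\sum_i a i)).
Proof.
move=> a0 Z0; set Z := \sum_i a i; set m := \sum_i a i * expR (x i).
have m0 : 0 < m.
  rewrite lt_def sumr_ge0 ?andbT; last by move=> i _; rewrite mulr_ge0 // ltW // expR_gt0.
  apply/eqP => /psumr_eq0P H; move: Z0; rewrite /Z big1 ?ltxx // => i _.
  have /eqP := H (fun i _ => mulr_ge0 (a0 i) (ltW (expR_gt0 (x i)))) i isT.
  rewrite mulf_eq0 => /orP [/eqP //|].
  by rewrite gt_eqF // expR_gt0.
have key : forall i, a i * (x i + ln Z - ln m) <= a i * (expR (x i) * Z / m - 1).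
  move=> i; apply: ler_wpM2l => //.
  have -> : x i + ln Z - ln m = ln (expR (x i) * Z / m).
    rewrite lnM ?posrE ?mulr_gt0 ?invr_gt0 ?expR_gt0 //.
    by rewrite lnM ?posrE ?expR_gt0 // expRK lnV ?posrE.
  by apply: ln_le_sub1; rewrite mulr_gt0 ?invr_gt0 ?mulr_gt0 ?expR_gt0.
have : \sum_i a i * (x i + ln Z - ln m) <= \sum_i a i * (expR (x i) * Z / m - 1).
  by apply: ler_sum => i _; exact: key.
have -> : \sum_i a i * (x i + ln Z - ln m) = \sum_i a i * x i + Z * (ln Z - ln m).
  rewrite mulr_suml -big_split /=; apply: eq_bigr => i _; ring.
have -> : \sum_i a i * (expR (x i) * Z / m - 1) = 0.
  have -> : \sum_i a i * (expR (x i) * Z / m - 1) = (Z / m) * m - Z.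
    rewrite /m /Z mulr_sumr -sumrB; apply: eq_bigr => i _. ring.
  by rewrite divfK ?gt_eqF // subrr.
move=> H; rewrite -subr_le0; apply: le_trans H; rewrite le_eqVlt; apply/orP; left; apply/eqP; ring.
Qed.

Lemma Z_gt0 (R : realType) (S A : finType) (P : S -> A -> S -> R) (beta : R) (V : S -> R) s a :
  is_kernel P -> 0 < \sum_(s' : S) P s a s' * expR (- (beta * V s')).
Proof.
move=> [P0 P1].
rewrite lt_def sumr_ge0 ?andbT; last by move=> i _; rewrite mulr_ge0 // ltW // expR_gt0.
apply/eqP => /psumr_eq0P H.
have H' : forall i, P s a i = 0.
  move=> i; have /eqP := H (fun i _ => mulr_ge0 (P0 s a i) (ltW (expR_gt0 _))) i isT.
  by rewrite mulf_eq0 => /orP [/eqP //|]; rewrite gt_eqF ?expR_gt0.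
by move: (P1 s a); rewrite big1 // => /esym/eqP; rewrite oner_eq0.
Qed.

Lemma law_prop (R : realType) (S A : finType) (rho : S -> R) (K : S -> A -> S -> R) (pi : S -> A) :
  is_dist rho -> is_kernel K ->
  forall t, (forall s, 0 <= state_law rho K pi t s) /\ \sum_s state_law rho K pi t s = 1.
Proof.
move=> [r0 r1] [K0 K1]; elim=> [|t [IH0 IH1]] //=; split.
  by move=> s; apply: sumr_ge0 => i _; rewrite mulr_ge0.
rewrite exchange_big /= -IH1; apply: eq_bigr => i _.
by rewrite -mulr_sumr K1 mulr1.
Qed.

Lemma law_step (R : realType) (S A : finType) (rho : S -> R) (K : S -> A -> S -> R) (pi : S -> A) t (f : S -> R) :
  \sum_s state_law rho K pi t.+1 s * f s =
  \sum_s state_law rho K pi t s * \sum_s' K s (pi s) s' * f s'.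
Proof.
rewrite /=. under eq_bigr do rewrite mulr_suml.
rewrite exchange_big /=; apply: eq_bigr => i _; rewrite mulr_sumr.
by apply: eq_bigr => j _; rewrite mulrA.
Qed.

Lemma tilted_is_kernel (R : realType) (S A : finType) (P : S -> A -> S -> R) (beta : R) (V : S -> R) :
  is_kernel P -> is_kernel (tilted_kernel P beta V).
Proof.
move=> HP; have [P0 P1] := HP; split.
  move=> s a s'; rewrite /tilted_kernel; apply: divr_ge0.
    by apply: mulr_ge0 => //; exact: ltW (expR_gt0 _).
  apply: ltW; exact: (Z_gt0 _ _ _ _ _ _ _ _ HP).
move=> s a; rewrite /tilted_kernel -mulr_suml divff // gt_eqF //; exact: (Z_gt0 _ _ _ _ _ _ _ _ HP).
Qed.

Theorem mainTheorem12 (R : realType) (S A : finType)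
  (P : S -> A -> S -> R) (r : S -> A -> R) (gamma beta : R) (rho : S -> R)
  (Vstar : S -> R) (Qstar : S -> A -> R) (piStar : S -> A)
  (Q : S -> A -> R) (piQ : S -> A) (VpiQ : S -> R) (QpiQ : S -> A -> R) :
  is_kernel P ->
  (forall s a, 0 <= r s a <= 1) ->
  0 <= gamma < 1 ->
  0 < beta ->
  is_dist rho ->
  is_optimal_values P r gamma beta Vstar Qstar ->
  (forall s a, Qstar s a <= Qstar s (piStar s)) ->
  (forall s a, Q s a <= Q s (piQ s)) ->
  is_policy_values P r gamma beta piQ VpiQ QpiQ ->
  let u := fun t : nat =>
    gamma ^+ t * \sum_(s : S)
      state_law rho (tilted_kernel P beta VpiQ) piQ t s *
      ((Qstar s (piStar s) - Q s (piStar s)) + (Q s (piQ s) - Qstar s (piQ s))) in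
  cvgn (series u) /\
  \sum_(s : S) rho s * (Vstar s - VpiQ s) <= limn (series u).
Proof.
move=> HP _ /andP [g0 g1] b0 Hrho [Hopt HQs] HpiS HpiQ [HV HQpi] u.
set K := tilted_kernel P beta VpiQ.
set D := fun s => Vstar s - VpiQ s.
set g := fun s => (Qstar s (piStar s) - Q s (piStar s)) + (Q s (piQ s) - Qstar s (piQ s)).
set L := state_law rho K piQ.
have HK : is_kernel K by apply: tilted_is_kernel.
have HL := law_prop _ _ _ _ _ piQ Hrho HK.
have Vs : forall s, Vstar s = Qstar s (piStar s).
  move=> s; have [H1 [a Ha]] := Hopt s; apply/eqP; rewrite eq_le H1 Ha HpiS //.
have step2 : forall s a, Qstar s a - QpiQ s a <= gamma * \sum_s' K s a s' * D s'.
  move=> s a; rewrite HQs HQpi /soft_Q.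
  set Zp := \sum_s' P s a s' * expR (- (beta * VpiQ s')).
  set Zs := \sum_s' P s a s' * expR (- (beta * Vstar s')).
  have Zp0 : 0 < Zp by apply: (Z_gt0 _ _ _ _ _ _ _ _ HP).
  have J := jensen_ln R S (fun i => P s a i * expR (- (beta * VpiQ i))) (fun i => - (beta * D i))
     (fun i => mulr_ge0 (HP.1 s a i) (ltW (expR_gt0 _))) Zp0.
  have E1 : \sum_i P s a i * expR (- (beta * VpiQ i)) * expR (- (beta * D i)) = Zs.
    apply: eq_bigr => i _; rewrite -mulrA -expRD; congr (_ * expR _); rewrite /D; ring.
  have E2 : \sum_i P s a i * expR (- (beta * VpiQ i)) * (- (beta * D i)) = - beta * Zp * \sum_s' K s a s' * D s'.
    rewrite mulr_sumr; apply: eq_bigr => i _; rewrite /K /tilted_kernel -/Zp.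
    by field; rewrite gt_eqF.
  rewrite E1 E2 in J.
  have J2 : ln Zp - ln Zs <= beta * \sum_s' K s a s' * D s'.
    rewrite -/Zp in J; rewrite -(ler_pM2l Zp0); nra.
  have H3 : gamma * beta^-1 * (ln Zp - ln Zs) <= gamma * beta^-1 * (beta * \sum_s' K s a s' * D s').
    by apply: ler_wpM2l => //; rewrite mulr_ge0 // invr_ge0 ltW.
  have E3 : gamma * beta^-1 * (beta * \sum_s' K s a s' * D s') = gamma * \sum_s' K s a s' * D s'.
    by field; rewrite gt_eqF.
  rewrite E3 in H3; rewrite -/Zp -/Zs; nra.
have step3 : forall s, D s <= g s + gamma * \sum_s' K s (piQ s) s' * D s'.
  move=> s; have := step2 s (piQ s); have := HpiQ s (piStar s).
  rewrite /D /g Vs HV; lra.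
have claim : forall n, \sum_s rho s * D s <= series u n + gamma ^+ n * \sum_s L n s * D s.
  elim=> [|n IH].
    by rewrite seriesEnat /= big_geq // expr0 mul1r add0r.
  rewrite seriesSr.
  set X := \sum_s L n s * \sum_s' K s (piQ s) s' * D s'.
  have h1 : \sum_s L n s * D s <= \sum_s L n s * g s + gamma * X.
    rewrite /X mulr_sumr -big_split /=; apply: ler_sum => s _.
    rewrite mulrCA -mulrDr; apply: ler_wpM2l; [exact: (HL n).1 | exact: step3].
  have h2 : u n = gamma ^+ n * \sum_s L n s * g s by [].
  have h3 : \sum_s L n.+1 s * D s = X by rewrite /L law_step.
  have h4 : gamma ^+ n * \sum_s L n s * D s <= gamma ^+ n * (\sum_s L n s * g s + gamma * X).
    by apply: ler_wpM2l => //; exact: exprn_ge0.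
  rewrite h3 h2 exprS; move: IH h4; set c := \sum_s rho s * D s; move=> IH h4.
  apply: le_trans IH _; rewrite -addrA lerD2l; apply: le_trans h4 _.
  by rewrite le_eqVlt; apply/orP; left; apply/eqP; ring.
have Ebound : forall (f : S -> R) n, \sum_s L n s * f s <= \sum_s `|f s|.
  move=> f n; apply: le_trans (_ : \sum_s L n s * \sum_s' `|f s'| <= _).
    apply: ler_sum => s _; apply: ler_wpM2l; first exact: (HL n).1.
    apply: le_trans (ler_norm (f s)) _.
    by rewrite (bigD1 s) //= lerDl sumr_ge0.
  by rewrite -mulr_suml (HL n).2 mul1r.
set C := \sum_s `|g s|.
have hu : forall n, `|u n| <= C * gamma ^+ n.
  move=> n; rewrite /u normrM ger0_norm ?exprn_ge0 // mulrC; apply: ler_wpM2r; first exact: exprn_ge0.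
  apply: le_trans (ler_norm_sum _ _ _) _.
  have := Ebound (fun s => `|g s|) n.
  have -> : \sum_s `| `|g s| | = C by apply: eq_bigr => s _; rewrite normr_id.
  apply: le_trans; rewrite le_eqVlt; apply/orP; left; apply/eqP; apply: eq_bigr => s _.
  by rewrite normrM ger0_norm //; exact: (HL n).1.
have cu : cvgn (series u).
  apply: normed_cvg.
  apply: (@series_le_cvg R _ (geometric C gamma)) => n //=.
  - by rewrite mulr_ge0 ?sumr_ge0 ?exprn_ge0.
  - apply: is_cvg_geometric_series; rewrite ger0_norm //.
split => //.
set M := \sum_s `|D s|.
have wl : series u n + M * gamma ^+ n @[n --> \oo] --> limn (series u) + M * 0.
  apply: cvgD; first exact: cu.
  apply: cvgMl_tmp; apply: cvg_expr; rewrite ger0_norm //.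
rewrite mulr0 addr0 in wl; apply: (cvgr_to_ge wl); apply: nearW => n /=.
have := claim n; have := Ebound D n; rewrite -/M => h1 h2.
have : gamma ^+ n * \sum_s L n s * D s <= gamma ^+ n * M.
  by apply: ler_wpM2l => //; exact: exprn_ge0.
rewrite mulrC; lra.
Qed.
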